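(* Let $(\mathfrak{A},\varphi,\tau)$ be a $*$-dynamical system and let $(\mathfrak{G},\pi,\Omega)$ be any cyclic representation of $(\mathfrak{A},\varphi)$. Let $\iota:\mathfrak{A}\to\mathfrak{G}$, $\iota(A)=\pi(A)\Omega$, and let $U_0:\mathfrak{G}\to\mathfrak{G}$ be the (well-defined, linear, norm at most $1$) operator $U_0\iota(A)=\iota(\tau(A))$. Let $U:\mathfrak{H}\to\mathfrak{H}$ be the bounded linear extension of $U_0$ to the completion $\mathfrak{H}$ of $\mathfrak{G}$, and let $P$ be the orthogonal projection of $\mathfrak{H}$ onto the subspace of fixed points of $U$. Then $(\mathfrak{A},\varphi,\tau)$ is ergodic if and only if $P=\Omega\otimes\Omega$, i.e. if and only if the fixed points of $U$ form a one-dimensional subspace of $\mathfrak{H}$.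
   Context: All algebras are over $\mathbb{C}$. A state on a unital $*$-algebra $\mathfrak{A}$ is a linear functional $\varphi$ with $\varphi(A^*A)\ge0$ for all $A$ and $\varphi(1)=1$. A $*$-dynamical system is a triple $(\mathfrak{A},\varphi,\tau)$ with $\mathfrak{A}$ a unital $*$-algebra, $\varphi$ a state, and $\tau:\mathfrak{A}\to\mathfrak{A}$ linear with $\tau(1)=1$ and $\varphi(\tau(A)^*\tau(A))\le\varphi(A^*A)$ for all $A$. Let $\|A\|_\varphi=\sqrt{\varphi(A^*A)}$, and identify $\alpha\in\mathbb{C}$ with $\alpha1$. The system is ergodic if for every sequence $(A_n)$ in $\mathfrak{A}$ with $\|\tau(A_n)-A_n\|_\varphi\to0$ which is Cauchy for $\|\cdot\|_\varphi$ (for every $\varepsilon>0$ there is $N$ with $\|A_m-A_n\|_\varphi\le\varepsilon$ for $m,n>N$), there is $\alpha\in\mathbb{C}$ with $\|A_n-\alpha\|_\varphi\to0$. A cyclic representation of $(\mathfrak{A},\varphi)$ is a triple $(\mathfrak{G},\pi,\Omega)$ with $\mathfrak{G}$ an inner product space, $\pi:\mathfrak{A}\to L(\mathfrak{G})$ (linear operators on $\mathfrak{G}$) linear with $\pi(1)=1$ and $\pi(AB)=\pi(A)\pi(B)$, $\Omega\in\mathfrak{G}$, $\pi(\mathfrak{A})\Omega=\mathfrak{G}$, and $\langle\pi(A)\Omega,\pi(B)\Omega\rangle=\varphi(A^*B)$ for all $A,B$. Inner products are linear in the second argument; for $x,y\in\mathfrak{H}$, $x\otimes y$ denotes the operator $z\mapsto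 x\langle y,z\rangle$. *)

(* Defs.v *)
(* The order on R[i] is the usual partial order of numClosedFields:
   x <= y iff y - x is a nonnegative real. *)
From HB Require Import structures.
From mathcomp Require Import all_boot all_order all_algebra.
From mathcomp Require Import reals complex.
Set Implicit Arguments. Unset Strict Implicit. Unset Printing Implicit Defensive.
Import Order.TTheory GRing.Theory Num.Theory Num.Def.
Local Open Scope ring_scope.

Section Defs.
Variable R : realType.
Local Notation C := R[i].

Definition is_star_algebra (A : algType C) (star : A -> A) : Prop :=
  [/\ forall a b : A, star (a + b) = star a + star b,
      forall (c : C) (a : A), star (c *: a) = (conjC c) *: star a,
      forall a b : A, star (a * b) = star b * star a
    & forall a : A, star (star a) = a].

Definition is_state (A : algType C) (star : A -> A) (phi : A -> C) : Prop :=
  [/\ forall (c : C) (a b : A), phi (c *: a + b) = c * phi a + phi b,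
      forall a : A, 0 <= phi (star a * a)
    & phi 1 = 1].

Definition is_star_dyn_system (A : algType C) (star : A -> A)
    (phi : A -> C) (tau : A -> A) : Prop :=
  [/\ is_star_algebra star, is_state star phi,
      forall (c : C) (a b : A), tau (c *: a + b) = c *: tau a + tau b,
      tau 1 = 1
    & forall a : A, phi (star (tau a) * tau a) <= phi (star a * a)].

Definition phinorm (A : algType C) (star : A -> A) (phi : A -> C) (a : A) : C :=
  sqrtC (phi (star a * a)).

Definition ergodic (A : algType C) (star : A -> A) (phi : A -> C)
    (tau : A -> A) : Prop :=
  forall u : nat -> A,
    (forall e : C, 0 < e -> exists N : nat, forall n : nat, (N < n)%N ->
        phinorm star phi (tau (u n) - u n) <= e) ->
    (forall e : C, 0 < e -> exists N : nat, forall m n : nat,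
        (N < m)%N -> (N < n)%N -> phinorm star phi (u m - u n) <= e) ->
    exists alpha : C, forall e : C, 0 < e -> exists N : nat,
      forall n : nat, (N < n)%N -> phinorm star phi (u n - alpha%:A) <= e.

Definition is_inner_product (G : lmodType C) (ip : G -> G -> C) : Prop :=
  [/\ forall (x y z : G) (c : C), ip x (c *: y + z) = c * ip x y + ip x z,
      forall x y : G, ip y x = conjC (ip x y),
      forall x : G, 0 <= ip x x
    & forall x : G, ip x x = 0 -> x = 0].

Definition ipnorm (G : lmodType C) (ip : G -> G -> C) (x : G) : C :=
  sqrtC (ip x x).

Definition ip_complete (H : lmodType C) (ip : H -> H -> C) : Prop :=
  forall u : nat -> H,
    (forall e : C, 0 < e -> exists N : nat, forall m n : nat,
        (N < m)%N -> (N < n)%N -> ipnorm ip (u m - u n) <= e) ->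
    exists h : H, forall e : C, 0 < e -> exists N : nat,
      forall n : nat, (N < n)%N -> ipnorm ip (u n - h) <= e.

Definition is_cyclic_rep (A : algType C) (star : A -> A) (phi : A -> C)
    (G : lmodType C) (ip : G -> G -> C) (pi : A -> G -> G) (Omega : G) : Prop :=
  is_inner_product ip /\
  (forall a : A, forall (c : C) (x y : G), pi a (c *: x + y) = c *: pi a x + pi a y) /\
  (forall (c : C) (a b : A) (x : G), pi (c *: a + b) x = c *: pi a x + pi b x) /\
  (forall x : G, pi 1 x = x) /\
  (forall (a b : A) (x : G), pi (a * b) x = pi a (pi b x)) /\
  (forall x : G, exists a : A, x = pi a Omega) /\
  (forall a b : A, ip (pi a Omega) (pi b Omega) = phi (star a * b)).

Definition is_completion (G : lmodType C) (ip : G -> G -> C)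
    (H : lmodType C) (ipH : H -> H -> C) (j : G -> H) : Prop :=
  [/\ is_inner_product ipH, ip_complete ipH,
      forall (c : C) (x y : G), j (c *: x + y) = c *: j x + j y,
      forall x y : G, ipH (j x) (j y) = ip x y
    & forall (h : H) (e : C), 0 < e -> exists x : G, ipnorm ipH (h - j x) <= e].

Definition is_bounded_linear (H : lmodType C) (ipH : H -> H -> C) (U : H -> H) : Prop :=
  (forall (c : C) (x y : H), U (c *: x + y) = c *: U x + U y) /\
  exists M : C, 0 <= M /\ forall h : H, ipnorm ipH (U h) <= M * ipnorm ipH h.

Definition is_fixed_point_projection (H : lmodType C) (ipH : H -> H -> C)
    (U : H -> H) (P : H -> H) : Prop :=
  (forall h : H, U (P h) = P h) /\
  (forall h k : H, U k = k -> ipH k (h - P h) = 0).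

End Defs.

(* Main.v *)
Require Import Defs.
From HB Require Import structures.
From mathcomp Require Import all_boot all_order all_algebra.
From mathcomp Require Import reals complex.
From mathcomp Require Import ring.
From Stdlib Require Import IndefiniteDescription FunctionalExtensionality.
Import Order.TTheory GRing.Theory Num.Theory Num.Def.
Local Open Scope ring_scope.
Set Implicit Arguments. Unset Strict Implicit. Unset Printing Implicit Defensive.

Section IP.
Variable R : realType.
Local Notation C := R[i].
Variables (G : lmodType C) (ip : G -> G -> C).
Hypothesis hip : is_inner_product ip.

Lemma ipDr x y z : ip x (y + z) = ip x y + ip x z.
Proof. by case: hip => h _ _ _; rewrite -[y]scale1r h mul1r scale1r. Qed.

Lemma ip0r x : ip x 0 = 0.
Proof. by have := ipDr x 0 0; rewrite addr0 -{1}[ip x 0]addr0 => /addrI. Qed.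

Lemma ipZr x c y : ip x (c *: y) = c * ip x y.
Proof. by case: hip => h _ _ _; rewrite -[c *: y]addr0 h ip0r addr0. Qed.

Lemma ipNr x y : ip x (- y) = - ip x y.
Proof. by rewrite -scaleN1r ipZr mulN1r. Qed.

Lemma ipBr x y z : ip x (y - z) = ip x y - ip x z.
Proof. by rewrite ipDr ipNr. Qed.

Lemma ipC x y : ip y x = (ip x y)^*.
Proof. by case: hip. Qed.

Lemma ipDl x y z : ip (y + z) x = ip y x + ip z x.
Proof. by rewrite [LHS]ipC ipDr rmorphD (ipC x y) (ipC x z). Qed.

Lemma ipNl x y : ip (- y) x = - ip y x.
Proof. by rewrite [LHS]ipC ipNr rmorphN (ipC x y). Qed.

Lemma ipBl x y z : ip (y - z) x = ip y x - ip z x.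
Proof. by rewrite ipDl ipNl. Qed.

Lemma ipZl x c y : ip (c *: y) x = c^* * ip y x.
Proof. by rewrite [LHS]ipC ipZr rmorphM (ipC x y). Qed.

Lemma N_ge0 x : 0 <= ip x x.
Proof. by case: hip. Qed.

Lemma N_eq0 x : ip x x = 0 -> x = 0.
Proof. by case: hip => _ _ _; apply. Qed.

Lemma NN x : ip (- x) (- x) = ip x x.
Proof. by rewrite ipNl ipNr opprK. Qed.

Lemma N_par x y : ip (x + y) (x + y) + ip (x - y) (x - y)
   = (ip x x + ip y y) *+ 2.
Proof.
rewrite !ipDl !ipDr !ipNl !ipNr opprK; ring.
Qed.

Lemma N_addle x y : ip (x + y) (x + y) <= (ip x x + ip y y) *+ 2.
Proof. by rewrite -N_par lerDl N_ge0. Qed.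

Lemma N_suble x y : ip (x - y) (x - y) <= (ip x x + ip y y) *+ 2.
Proof. by have := N_addle x (- y); rewrite NN. Qed.

Lemma N_sym x y : ip (x - y) (x - y) = ip (y - x) (y - x).
Proof. by rewrite -NN opprB. Qed.

Lemma ipnorm_le x e : 0 <= e -> (ipnorm ip x <= e) = (ip x x <= e ^+ 2).
Proof.
move=> he; rewrite /ipnorm -{1}(sqrCK he) ler_sqrtC //.
  by rewrite qualifE /= N_ge0.
by rewrite qualifE /= exprn_ge0.
Qed.

End IP.

Section EPS.
Variable R : realType.
Local Notation C := R[i].

Definition t0 (f : nat -> C) := forall e : C, 0 < e -> exists N : nat,
  forall n : nat, (N < n)%N -> f n <= e.

Lemma t0_le f g : (forall n, f n <= g n) -> t0 g -> t0 f.
Proof.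
move=> fg tg e he; have [N hN] := tg e he; exists N => n /hN.
exact: le_trans (fg n).
Qed.

Lemma t0_add f g : t0 f -> t0 g -> t0 (fun n => f n + g n).
Proof.
move=> tf tg e he; have he2 : 0 < e / 2 by rewrite divr_gt0.
have [N1 h1] := tf _ he2; have [N2 h2] := tg _ he2.
exists (maxn N1 N2) => n; rewrite gtn_max => /andP[n1 n2].
by rewrite [e]splitr lerD ?h1 ?h2.
Qed.

Lemma t0_scale c f : 0 < c -> t0 f -> t0 (fun n => c * f n).
Proof.
move=> hc tf e he; have hec : 0 < e / c by rewrite divr_gt0.
have [N hN] := tf _ hec; exists N => n /hN hn.
rewrite -(ler_pM2l hc) in hn.
by rewrite (le_trans hn) // mulrC divfK // gt_eqF.
Qed.

Lemma le_all0 (x : C) : 0 <= x -> (forall e, 0 < e -> x <= e) -> x = 0.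
Proof.
move=> x0 h; apply/eqP; apply: contraT => xn0.
have xp : 0 < x by rewrite lt_def xn0 x0.
have h1 := h (x / 2) (divr_gt0 xp (ltr0Sn _ 1)).
have h2 : x / 2 < x by rewrite ltr_pdivrMr ?ltr0Sn // ltr_pMr // ltr1n.
by have := lt_le_trans h2 h1; rewrite ltxx.
Qed.

Lemma t0_const0 (x : C) f : 0 <= x -> (forall n, x <= f n) -> t0 f -> x = 0.
Proof.
move=> x0 h tf; apply: le_all0 => // e he.
have [N hN] := tf e he; exact: le_trans (h N.+1) (hN _ (ltnSn N)).
Qed.

Lemma sq1 (x : nat -> C) : (forall n, 0 <= x n) ->
  (forall e, 0 < e -> exists N : nat, forall n, (N < n)%N -> sqrtC (x n) <= e)
  <-> t0 x.
Proof.
move=> x0; split.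
- move=> h e he; have hs : 0 < sqrtC e by rewrite sqrtC_gt0.
  have [N hN] := h (sqrtC e) hs.
  exists N => n /hN; rewrite ler_sqrtC // qualifE /= ?x0 //; exact: ltW.
- move=> h e he; have [N hN] := h (e ^+ 2) (exprn_gt0 _ he).
  exists N => n /hN hn; rewrite -(sqrCK (ltW he)) ler_sqrtC // qualifE /= ?x0 //.
  exact: exprn_ge0 (ltW he).
Qed.

Lemma sq2 (x : nat -> nat -> C) : (forall m n, 0 <= x m n) ->
  (forall e, 0 < e -> exists N : nat, forall m n, (N < m)%N -> (N < n)%N ->
     sqrtC (x m n) <= e)
  <-> (forall e, 0 < e -> exists N : nat, forall m n, (N < m)%N -> (N < n)%N ->
     x m n <= e).
Proof.
move=> x0; split.
- move=> h e he; have hs : 0 < sqrtC e by rewrite sqrtC_gt0.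
  have [N hN] := h (sqrtC e) hs.
  exists N => m n hm hn; move: (hN m n hm hn).
  by rewrite ler_sqrtC // ?qualifE /= ?x0 // ltW.
- move=> h e he; have [N hN] := h (e ^+ 2) (exprn_gt0 _ he).
  exists N => m n hm hn; have hh := hN m n hm hn.
  rewrite -[e in sqrtC _ <= e](sqrCK (ltW he)) ler_sqrtC // ?qualifE /= ?x0 //.
  by rewrite exprn_ge0 // ltW.
Qed.

Lemma archiC (e : C) : 0 < e -> exists N : nat, (N.+1%:R : C)^-1 <= e.
Proof.
move=> he.
have hie : 0 < e^-1 by rewrite invr_gt0.
have rie : e^-1 \is Num.real by rewrite gtr0_real.
have hr := RRe_real rie.
have r0 : (0 : R) <= complex.Re e^-1 by rewrite -ler0c hr ltW.
have hb := archi_boundP r0.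
exists (archi_bound (complex.Re e^-1)).
set b := archi_bound _ in hb *.
have hb' : e^-1 < b.+1%:R.
  rewrite -hr (le_lt_trans (_ : _ <= real_complex R (b%:R : R))) //.
    by rewrite lecR ltW.
  by rewrite rmorph_nat ltr_nat.
rewrite -[X in X <= _]div1r ler_pdivrMr ?ltr0Sn //.
rewrite -[e^-1]mulr1 ltr_pdivrMl // in hb'.
exact: ltW.
Qed.

Lemma t0_inv : t0 (fun n => (n.+1%:R : C)^-1).
Proof.
move=> e he; have [N hN] := archiC he; exists N => n hn.
apply: le_trans hN; rewrite lef_pV2 ?posrE ?ltr0Sn // ler_nat.
exact: ltnW.
Qed.

Lemma t0_mul2 f : t0 f -> t0 (fun n => f n *+ 2).
Proof. by move=> tf; apply: t0_le (t0_add tf tf) => n; rewrite mulr2n. Qed.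

End EPS.

Lemma linB (R : realType) (V W : lmodType R[i]) (f : V -> W) :
  (forall c x y, f (c *: x + y) = c *: f x + f y) ->
  forall x y, f (x - y) = f x - f y.
Proof.
move=> hf x y; rewrite addrC -scaleN1r hf scaleN1r addrC.
done.
Qed.

Lemma lin0 (R : realType) (V W : lmodType R[i]) (f : V -> W) :
  (forall c x y, f (c *: x + y) = c *: f x + f y) -> f 0 = 0.
Proof. by move=> hf; rewrite -(subrr 0) (linB hf) subrr. Qed.

Lemma linZ (R : realType) (V W : lmodType R[i]) (f : V -> W) :
  (forall c x y, f (c *: x + y) = c *: f x + f y) ->
  forall c x, f (c *: x) = c *: f x.
Proof. by move=> hf c x; rewrite -[c *: x]addr0 hf (lin0 hf) addr0. Qed.

Section Main.
Variables (R : realType) (A : algType R[i]) (star : A -> A)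
    (phi : A -> R[i]) (tau : A -> A)
    (G : lmodType R[i]) (ip : G -> G -> R[i]) (pi : A -> G -> G) (Omega : G)
    (H : lmodType R[i]) (ipH : H -> H -> R[i]) (j : G -> H)
    (U : H -> H) (P : H -> H).
Hypotheses (hsys : is_star_dyn_system star phi tau)
  (hrep : is_cyclic_rep star phi ip pi Omega)
  (hcomp : is_completion ip ipH j)
  (hU : is_bounded_linear ipH U)
  (hUi : forall a : A, U (j (pi a Omega)) = j (pi (tau a) Omega))
  (hP : is_fixed_point_projection ipH U P).

Local Notation iota a := (j (pi a Omega)).

Lemma hipH : is_inner_product ipH.
Proof. by case: hcomp. Qed.

Lemma iota_lin c a b : iota (c *: a + b) = c *: iota a + iota b.
Proof.
case: hrep => _ [_ [hpi _]]; case: hcomp => _ _ hj _ _.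
by rewrite hpi hj.
Qed.

Lemma iotaB a b : iota (a - b) = iota a - iota b.
Proof. exact: (linB (f := fun a => iota a)) iota_lin a b. Qed.

Lemma NHiota a : ipH (iota a) (iota a) = phi (star a * a).
Proof.
case: hrep => _ [_ [_ [_ [_ [_ hip]]]]]; case: hcomp => _ _ _ hj _.
by rewrite hj hip.
Qed.

Lemma phinorm_iota a : phinorm star phi a = ipnorm ipH (iota a).
Proof. by rewrite /phinorm /ipnorm NHiota. Qed.

Lemma star1 : star 1 = 1.
Proof.
case: hsys => [[_ _ hM hK] _ _ _ _].
by have := hM 1 (star 1); rewrite mul1r hK mul1r => <-.
Qed.

Lemma iota1 : iota 1 = j Omega.
Proof. by case: hrep => _ [_ [_ [h1 _]]]; rewrite h1. Qed.

Lemma iotaC (c : R[i]) : iota (c%:A) = c *: j Omega.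
Proof. by rewrite (linZ (f := fun a => iota a)) ?iota1 //; exact: iota_lin. Qed.

Lemma Ulin c x y : U (c *: x + y) = c *: U x + U y.
Proof. by case: hU. Qed.

Lemma UB x y : U (x - y) = U x - U y.
Proof. exact: linB Ulin x y. Qed.

Lemma UjO : U (j Omega) = j Omega.
Proof. by case: hsys => _ _ _ ht1 _; rewrite -iota1 hUi ht1. Qed.

Lemma NjO : ipH (j Omega) (j Omega) = 1.
Proof.
case: hsys => _ [_ _ hphi1] _ _ _.
by rewrite -iota1 NHiota star1 mul1r.
Qed.

Lemma Ubound : exists M2 : R[i], 0 < M2 /\
  forall h, ipH (U h) (U h) <= M2 * ipH h h.
Proof.
case: hU => _ [M [M0 hM]]; exists (M ^+ 2 + 1); split.
  by rewrite ltr_pwDr ?ltr01 ?exprn_ge0.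
move=> h; have := hM h.
rewrite -(ler_pXn2r (n := 2)) // ?qualifE /= ?mulr_ge0 ?sqrtC_ge0 ?N_ge0 //;
  try exact: hipH.
rewrite exprMn /ipnorm !sqrtCK => hh; apply: le_trans hh _.
by rewrite ler_wpM2r ?N_ge0 ?lerDl ?ler01 //; exact: hipH.
Qed.

Definition Fix1 := forall k, U k = k -> k = ipH (j Omega) k *: j Omega.

Lemma partA : Fix1 <-> P = (fun h : H => ipH (j Omega) h *: j Omega).
Proof.
have hip := hipH; case: hP => hP1 hP2; split.
- move=> F; apply: functional_extensionality => h.
  have fx := hP1 h; rewrite (F _ fx); congr (_ *: _).
  have := hP2 h (j Omega) UjO; rewrite ipBr // => /eqP; rewrite subr_eq0.
  by move=> /eqP <-.
- move=> eP k Uk.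
  have Ud : U (k - P k) = k - P k by rewrite UB Uk hP1.
  have := hP2 k _ Ud => /(N_eq0 hip) /subr0_eq hk.
  by rewrite {1}hk eP.
Qed.

Lemma partB2 : Fix1 -> ergodic star phi tau.
Proof.
have hip := hipH; move=> F u hτ hC.
have [M2 [M2p hM2]] := Ubound.
have hCv : forall e : R[i], 0 < e -> exists N : nat, forall m n : nat,
    (N < m)%N -> (N < n)%N -> ipnorm ipH (iota (u m) - iota (u n)) <= e.
  by move=> e /hC [N hN]; exists N => m n hm hn; rewrite -iotaB -phinorm_iota hN.
have [h hh] : exists h, forall e : R[i], 0 < e -> exists N : nat,
      forall n : nat, (N < n)%N -> ipnorm ipH (iota (u n) - h) <= e.
  by case: hcomp => _ hc _ _ _; apply: hc.
have t1 : t0 (fun n => ipH (iota (u n) - h) (iota (u n) - h)).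
  by apply/sq1 => [n|]; [exact: N_ge0 | exact: hh].
have t2 : t0 (fun n => ipH (iota (tau (u n) - u n)) (iota (tau (u n) - u n))).
  apply/sq1 => [n|]; first exact: N_ge0.
  by move=> e /hτ [N hN]; exists N => n /hN; rewrite phinorm_iota.
have Uh : U h = h.
  apply/subr0_eq/(N_eq0 hip).
  apply: (t0_const0 (N_ge0 hip _) _ (t0_mul2 (t0_add (t0_scale M2p t1)
           (t0_mul2 (t0_add t2 t1))))) => n.
  have -> : U h - h = U (h - iota (u n)) + ((iota (tau (u n) - u n))
                       + (iota (u n) - h)).
    by rewrite UB hUi iotaB !addrA !subrK.
  apply: le_trans (N_addle hip _ _) _; apply: ler_wMn2r; apply: lerD.
    by rewrite (N_sym hip (iota (u n))) hM2.
  exact: N_addle.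
have [alpha halpha] : exists alpha, h = alpha *: j Omega.
  by exists (ipH (j Omega) h); apply: F.
exists alpha => e /hh [N hN]; exists N => n /hN.
by rewrite phinorm_iota iotaB iotaC -halpha.
Qed.

Lemma partB1 : ergodic star phi tau -> Fix1.
Proof.
have hip := hipH; move=> erg k Uk.
have [M2 [M2p hM2]] := Ubound.
pose d (n : nat) : R[i] := (n.+1%:R)^-1.
have d0 n : 0 < d n by rewrite /d invr_gt0 ltr0Sn.
have td : t0 d := @t0_inv R.
have dens : forall n, exists a, ipH (k - iota a) (k - iota a) <= d n.
  move=> n; case: hcomp => _ _ _ _ hd.
  have hs : 0 < sqrtC (d n) by rewrite sqrtC_gt0.
  have [x hx] := hd k _ hs.
  case: hrep => _ [_ [_ [_ [_ [hcyc _]]]]].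
  have [a hxa] := hcyc x; rewrite hxa in hx; exists a.
  by move: hx; rewrite ipnorm_le ?sqrtCK // ltW.
have [a ha] := functional_choice _ dens.
have ta : t0 (fun n => ipH (iota (tau (a n) - a n)) (iota (tau (a n) - a n))).
  apply: (t0_le _ (t0_mul2 (t0_scale (ltr_pwDl ltr01 (ltW M2p)) td))) => n.
  have -> : iota (tau (a n) - a n) = (k - iota (a n)) - U (k - iota (a n)).
    by rewrite iotaB UB Uk hUi opprB [RHS]addrC [RHS]addrA subrK.
  apply: le_trans (N_suble hip _ _) _; apply: ler_wMn2r.
  rewrite mulrDl mul1r; apply: lerD; first exact: ha.
  by apply: le_trans (hM2 _) _; rewrite ler_wpM2l // ltW.
have hτ : forall e : R[i], 0 < e -> exists N : nat, forall n : nat,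
    (N < n)%N -> phinorm star phi (tau (a n) - a n) <= e.
  move=> e he; have [N hN] := (proj2 (sq1 (fun n => N_ge0 hip _)) ta) e he.
  by exists N => n /hN; rewrite phinorm_iota.
have tc : forall e : R[i], 0 < e -> exists N : nat, forall m n : nat,
    (N < m)%N -> (N < n)%N ->
    ipH (iota (a m - a n)) (iota (a m - a n)) <= e.
  move=> e he; have he2 : 0 < e / 2 by rewrite divr_gt0.
  have [N hN] := t0_mul2 td he2; exists N => m n hm hn.
  have -> : iota (a m - a n) = (k - iota (a n)) - (k - iota (a m)).
    by rewrite iotaB opprB [RHS]addrC [RHS]addrA subrK.
  apply: le_trans (N_suble hip _ _) _.
  rewrite mulrnDl [e]splitr; apply: lerD.
    by apply: le_trans (hN _ hn); apply: ler_wMn2r.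
  by apply: le_trans (hN _ hm); apply: ler_wMn2r.
have hc : forall e : R[i], 0 < e -> exists N : nat, forall m n : nat,
    (N < m)%N -> (N < n)%N -> phinorm star phi (a m - a n) <= e.
  move=> e he.
  have [N hN] := (proj2 (sq2 (fun m n => N_ge0 hip (iota (a m - a n)))) tc) e he.
  by exists N => m n hm hn; rewrite phinorm_iota; apply: hN.
have [alpha halpha] := erg a hτ hc.
have tg : t0 (fun n => ipH (iota (a n) - alpha *: j Omega)
                           (iota (a n) - alpha *: j Omega)).
  apply/sq1 => [n|]; first exact: N_ge0.
  by move=> e /halpha [N hN]; exists N => n /hN; rewrite phinorm_iota iotaB iotaC.
have hk : k = alpha *: j Omega.
  apply/subr0_eq/(N_eq0 hip).
  apply: (t0_const0 (N_ge0 hip _) _ (t0_mul2 (t0_add td tg))) => n.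
  have -> : k - alpha *: j Omega
          = (k - iota (a n)) + (iota (a n) - alpha *: j Omega).
    by rewrite addrA subrK.
  apply: le_trans (N_addle hip _ _) _; apply: ler_wMn2r; apply: lerD => //.
by rewrite {2}hk ipZr // NjO mulr1.
Qed.

End Main.

Unset Implicit Arguments.

Theorem proposition2p4 (R : realType) (A : algType R[i]) (star : A -> A)
    (phi : A -> R[i]) (tau : A -> A)
    (G : lmodType R[i]) (ip : G -> G -> R[i]) (pi : A -> G -> G) (Omega : G)
    (H : lmodType R[i]) (ipH : H -> H -> R[i]) (j : G -> H)
    (U : H -> H) (P : H -> H) :
  is_star_dyn_system star phi tau ->
  is_cyclic_rep star phi ip pi Omega ->
  is_completion ip ipH j ->
  is_bounded_linear ipH U ->
  (forall a : A, U (j (pi a Omega)) = j (pi (tau a) Omega)) ->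
  is_fixed_point_projection ipH U P ->
  (ergodic star phi tau <-> P = (fun h : H => ipH (j Omega) h *: j Omega)).
Proof.
move=> hsys hrep hcomp hU hUi hP.
rewrite -(partA hsys hrep hcomp hU hUi hP); split.
  exact: (partB1 hsys hrep hcomp hU hUi).
exact: (partB2 hrep hcomp hU hUi).
Qed.
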